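(* Let $d\in\mathbb N\cup\{\infty\}$ and ${\boldsymbol\gamma}\in\mathcal W_d\setminus\mathcal M_d$. Then the set $\Gamma=\{\widetilde{\boldsymbol\gamma}\in\mathcal M_d:\widetilde{\boldsymbol\gamma}\le{\boldsymbol\gamma}\}$, partially ordered by componentwise $\le$, contains a maximal element.
   Context: Write $[d]=\{1,\dots,d\}$ if $d\in\mathbb N$ and $[d]=\mathbb N$ if $d=\infty$. $\mathcal U_d$ is the set of finite subsets of $[d]$; $\mathcal W_d$ is the set of families $(\gamma_u)_{u\in\mathcal U_d}$ of non-negative reals, ordered componentwise. $(\Delta_v{\boldsymbol\gamma})_u=\sum_{w\subseteq v}(-1)^{|w|}\gamma_{u\cup w}$; $\mathcal M_d$ is the set of ${\boldsymbol\gamma}\in\mathcal W_d$ with $(\Delta_v{\boldsymbol\gamma})_u\ge0$ for all $u,v\in\mathcal U_d$ (completely monotone weights). *)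

(* Defs.v *)
From HB Require Import structures.
From mathcomp Require Import all_boot all_order all_algebra.
From mathcomp Require Import finmap.
From mathcomp Require Import reals.
Set Implicit Arguments. Unset Strict Implicit. Unset Printing Implicit Defensive.
Import Order.TTheory GRing.Theory Num.Theory.
Local Open Scope ring_scope.
Local Open Scope fset_scope.

(* d : option nat; Some n means d = n, None means d = infinity. *)
Definition in_dim (d : option nat) (i : nat) : bool :=
  (1 <= i)%N && (if d is Some n then (i <= n)%N else true).

Definition in_Ud (d : option nat) (u : {fset nat}) : Prop :=
  forall i, i \in u -> in_dim d i.

(* Weight families are functions {fset nat} -> R; only values on U_d matter. *)
Definition in_Wd {R : realType} (d : option nat) (g : {fset nat} -> R) : Prop :=
  forall u, in_Ud d u -> 0 <= g u.

Definition leW {R : realType} (d : option nat) (g h : {fset nat} -> R) : Prop :=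
  forall u, in_Ud d u -> g u <= h u.

Definition Delta {R : realType} (g : {fset nat} -> R) (v u : {fset nat}) : R :=
  \sum_(w <- fpowerset v) (-1) ^+ #|` w| * g (u `|` w).

Definition in_Md {R : realType} (d : option nat) (g : {fset nat} -> R) : Prop :=
  in_Wd d g /\ forall u v, in_Ud d u -> in_Ud d v -> 0 <= Delta g v u.

(* Main.v *)
Require Import Defs.
From HB Require Import structures.
From mathcomp Require Import all_boot all_order all_algebra.
From mathcomp Require Import finmap.
From mathcomp Require Import reals.
From mathcomp Require Import boolp classical_sets wochoice.
From mathcomp Require Import lra.
Import Order.TTheory GRing.Theory Num.Theory.
Local Open Scope ring_scope.

Section Aux.
Variables (R : realType) (d : option nat) (g : {fset nat} -> R).

Lemma in_UdU u w : in_Ud d u -> in_Ud d w -> in_Ud d (u `|` w)%fset.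
Proof. by move=> hu hw i; rewrite inE => /orP[/hu|/hw]. Qed.

Lemma in_Ud_pow v w : in_Ud d v -> w \in fpowerset v -> in_Ud d w.
Proof. by move=> hv; rewrite fpowersetE => /fsubsetP sub i /sub; exact: hv. Qed.

Arguments in_Ud_pow {v w}.
Arguments in_UdU {u w}.
Definition Rl : rel ({fset nat} -> R) := fun a b => `[< leW d a b >].

Lemma RlP a b : Rl a b <-> leW d a b.
Proof. by split => /asboolP. Qed.

Lemma sum_const_seq (r : seq {fset nat}) (c : R) :
  \sum_(w <- r) c = (size r)%:R * c.
Proof.
elim: r => [|x r IH]; first by rewrite big_nil mul0r.
by rewrite big_cons IH /= -nat1r mulrDl mul1r.
Qed.

Lemma sup_chain (C : {pred ({fset nat} -> R)}) (c0 : {fset nat} -> R) :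
  c0 \in C -> chain Rl C ->
  (forall h, h \in C -> in_Md d h /\ leW d h g) ->
  exists s, (in_Md d s /\ leW d s g) /\ forall h, h \in C -> leW d h s.
Proof.
move=> c0C Cch CS.
pose E u := [set x : R | exists2 h, h \in C & h u = x]%classic.
pose s u := sup (E u).
have hne u : (E u !=set0)%classic by exists (c0 u); exists c0.
have hub u : in_Ud d u -> has_ubound (E u).
  by move=> hu; exists (g u) => x [h hC <-]; exact: (proj2 (CS h hC)).
have up h u : h \in C -> in_Ud d u -> h u <= s u.
  by move=> hC hu; apply: ub_le_sup (hub u hu) _ _; exists h.
have sle u : in_Ud d u -> s u <= g u.
  by move=> hu; apply: ge_sup => // x [h hC <-]; exact: (proj2 (CS h hC)).
exists s; split; last by move=> h hC u hu; exact: up.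
split => //; split.
  move=> u hu; apply: le_trans (up c0 u c0C hu).
  exact: (proj1 (proj1 (CS c0 c0C))).
move=> u v hu hv; rewrite leNgt; apply/negP => Dlt.
set e := - Delta s v u.
have e0 : 0 < e by rewrite oppr_gt0.
set N := (size (fpowerset v))%:R : R.
have N0 : 0 <= N by rewrite ler0n.
set eps := e / (N + 1).
have N10 : 0 < N + 1 by lra.
have eps0 : 0 < eps by rewrite divr_gt0.
have [m [mC mapp]] : exists m, m \in C /\ forall w, w \in fpowerset v ->
    s (u `|` w)%fset - eps < m (u `|` w)%fset.
  suff : forall r : seq {fset nat}, {subset r <= fpowerset v} ->
      exists m, m \in C /\ forall w, w \in r -> s (u `|` w)%fset - eps < m (u `|` w)%fset.
    by apply.
  elim => [|w r IH] sub; first by exists c0; split.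
  have hw : in_Ud d (u `|` w)%fset.
    by apply: in_UdU => //; apply: (in_Ud_pow hv); apply: sub; rewrite inE eqxx.
  have [m [mC mr]] : exists m, m \in C /\ forall w, w \in r ->
      s (u `|` w)%fset - eps < m (u `|` w)%fset.
    by apply: IH => x xr; apply: sub; rewrite inE xr orbT.
  have [_ [h hC <-] hlt] := sup_adherent eps0 (conj (hne (u `|` w)%fset) (hub _ hw)).
  have := Cch h m hC mC; case/orP => /RlP le.
    exists m; split => // w'; rewrite inE => /orP[/eqP->|]; last exact: mr.
    exact: lt_le_trans hlt (le _ hw).
  exists h; split => // w'; rewrite inE => /orP[/eqP->|] // w'r.
  apply: lt_le_trans (mr _ w'r) (le _ _).
  by apply: in_UdU => //; apply: (in_Ud_pow hv); apply: sub; rewrite inE w'r orbT.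
have mD := (proj2 (proj1 (CS m mC))) u v hu hv.
have bound : Delta m v u - Delta s v u <= N * eps.
  rewrite /Delta -sumrB.
  apply: le_trans (ler_norm _) _; apply: le_trans (ler_norm_sum _ _ _) _.
  rewrite /N -sum_const_seq !big_seq; apply: ler_sum => w wv.
  have hw : in_Ud d (u `|` w)%fset.
    apply: in_UdU => //; exact: (in_Ud_pow hv wv).
  rewrite -mulrBr normrM normrX normrN1 expr1n mul1r.
  have h1 := up m _ mC hw; have h2 := mapp w wv.
  rewrite ler_norml; apply/andP; split.
  + move: h1 h2; set a := m _; set b := s _; move: eps0; set ee := eps; move=> *; lra.
  + move: h1 h2; set a := m _; set b := s _; move: eps0; set ee := eps; move=> *; lra.
have He : e = eps * (N + 1) by rewrite /eps divfK // gt_eqF.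
have : N * eps < e by rewrite He; nra.
rewrite /e in He *; lra.
Qed.

End Aux.

Theorem mainTheorem18 (R : realType) (d : option nat) (g : {fset nat} -> R) :
  in_Wd d g -> ~ in_Md d g ->
  exists gt : {fset nat} -> R,
    (in_Md d gt /\ leW d gt g) /\
    (forall h : {fset nat} -> R, in_Md d h -> leW d h g -> leW d gt h -> leW d h gt).
Proof.
move=> gW _.
pose S : {pred ({fset nat} -> R)} := fun h => `[< in_Md d h /\ leW d h g >].
have SP h : h \in S <-> (in_Md d h /\ leW d h g).
  by rewrite /in_mem /=; split => /asboolP.
have [|||z zS zmax] := @Zorn's_lemma _ (@Rl R d) S.
- by move=> x _; apply/RlP => u _.
- move=> y x z _ _ _ /RlP h1 /RlP h2; apply/RlP => u hu.
  exact: le_trans (h1 u hu) (h2 u hu).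
- move=> C CS Cwo.
  have Cch := wo_chainW Cwo.
  have [[c0 c0C]|C0] := pselect (exists c, c \in C).
    have [s [sS sub]] := @sup_chain R d g C c0 c0C Cch (fun h hC => proj1 (SP h) (CS h hC)).
    exists s; first exact/SP.
    by move=> h hC; apply/RlP; exact: sub.
  exists (fun _ => 0).
    apply/SP; split; last by move=> u hu; exact: gW.
    split; first by move=> u _.
    by move=> u v _ _; rewrite /Delta big1 // => w _; rewrite mulr0.
  by move=> h hC; exfalso; apply: C0; exists h.
- exists z; split; first exact/SP.
  move=> h hM hg hz; apply/RlP; apply: zmax; first exact/SP.
  exact/RlP.
Qed.
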